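(* $\mathrm{cov}^{*}(\mathcal{S}pl)=\mathfrak{r}$.
   Context: For an infinite $A\subseteq\omega$, let $S(A)$ be the set of all $\sigma\in2^{<\omega}$ such that $\sigma$ is constant on $A\cap\mathrm{dom}(\sigma)$. The splitting ideal $\mathcal{S}pl$ is the ideal on $2^{<\omega}$ generated by the sets $S(A)$, $A\in[\omega]^{\omega}$ (i.e. its elements are the subsets of finite unions of such sets). For a tall ideal $\mathcal{J}$ on a countable set $X$, $\mathrm{cov}^{*}(\mathcal{J})=\min\{|\mathcal{F}|:\mathcal{F}\subseteq\mathcal{J}$ and for every infinite $Y\subseteq X$ there is $F\in\mathcal{F}$ with $|F\cap Y|=\omega\}$. $\mathfrak{r}$ is the reaping number: the least size of a family $\mathcal{R}\subseteq[\omega]^\omega$ such that no single $B\in[\omega]^\omega$ splits every member of $\mathcal{R}$ (where $B$ splits $A$ if $A\cap B$ and $A\setminus B$ are both infinite). *)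

(* Defs.v *)
From mathcomp Require Import all_boot.
From mathcomp Require Import boolp classical_sets cardinality.
Set Implicit Arguments. Unset Strict Implicit. Unset Printing Implicit Defensive.
Local Open Scope classical_set_scope.

(* 2^{<omega} is represented by seq bool; dom(sigma) = {0,...,size sigma - 1}. *)

Definition S_of (A : set nat) : set (seq bool) :=
  [set s | forall i j, A i -> A j -> i < size s -> j < size s ->
             nth false s i = nth false s j].

Definition Spl : set (set (seq bool)) :=
  [set X | exists As : seq (set nat),
     (forall A, A \in As -> infinite_set A) /\
     (forall s, X s -> exists2 A, A \in As & S_of A s)].

Definition cov_star_family {X : Type} (J : set (set X)) (F : set (set X)) : Prop :=
  F `<=` J /\
  forall Y : set X, infinite_set Y -> exists2 Z, F Z & infinite_set (Z `&` Y).

Definition splits (B A : set nat) : Prop :=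
  infinite_set (A `&` B) /\ infinite_set (A `\` B).

Definition reaping_family (R : set (set nat)) : Prop :=
  (forall A, R A -> infinite_set A) /\
  ~ (exists B : set nat, infinite_set B /\ forall A, R A -> splits B A).

(* Equality of two minimum cardinalities: each class's minimum is
   bounded by every member of the other class. *)
Definition min_card_eq {T U : Type} (P : set (set T)) (Q : set (set U)) : Prop :=
  (forall F, P F -> exists2 G, Q G & (G #<= F)%card) /\
  (forall G, Q G -> exists2 F, P F & (F #<= G)%card).

(* Main.v *)
Require Import Defs.
From mathcomp Require Import all_boot.
From mathcomp Require Import boolp classical_sets cardinality.
Set Implicit Arguments. Unset Strict Implicit. Unset Printing Implicit Defensive.
Local Open Scope classical_set_scope.
Local Open Scope card_scope.
Definition injto {T U} (A : set T) (B : set U) :=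
  exists f : T -> U, (forall a, A a -> B (f a)) /\
    (forall a b, A a -> A b -> f a = f b -> a = b).

Lemma injto_card {T U} (A : set T) (B : set U) : injto A B -> A #<= B.
Proof.
elim/Ppointed: U => U in B *.
  move=> [f _]; have -> : A = set0 by apply/seteqP; split=> a // _; exact: (no (f a)).
  exact: card_ge0.
move=> [f [fAB finj]]; apply/pcard_leP; apply/injfunPex; exists f.
  by move=> a /fAB.
by move=> a b; rewrite !inE => Aa Ab; apply: finj.
Qed.

Lemma card_injto {T U} (A : set T) (B : set U) (u0 : U) : A #<= B -> injto A B.
Proof.
elim/Ppointed: U => U in B u0 *; first by case: (no u0).
move=> /pcard_leP /injfunPex [f fAB finj]; exists f; split.
  by move=> a Aa; apply: fAB.
by move=> a b Aa Ab; apply: finj; rewrite inE.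
Qed.

Lemma injto_trans {T U V} (A : set T) (B : set U) (C : set V) :
  injto A B -> injto B C -> injto A C.
Proof.
move=> [f [fAB fi]] [g [gBC gi]]; exists (g \o f); split => [a Aa|a b Aa Ab /= e].
  exact/gBC/fAB.
by apply: fi => //; apply: gi => //; apply: fAB.
Qed.

Lemma injto_sub {T} (A B : set T) : A `<=` B -> injto A B.
Proof. by move=> AB; exists id; split => // a /AB. Qed.

Lemma injto_setX {T T' U U'} (A : set T) (A' : set T') (B : set U) (B' : set U') :
  injto A B -> injto A' B' -> injto (A `*` A') (B `*` B').
Proof.
move=> [f [fAB fi]] [g [gBC gi]]; exists (fun p => (f p.1, g p.2)); split.
  by move=> [a a'] [/= Aa Aa']; split; [apply: fAB|apply: gBC].
move=> [a a'] [b b'] [/= Aa Aa'] [/= Ab Ab'] [] /fi -> // /gi -> //.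
Qed.

Lemma chain_common {T} (F : set (set T)) G1 G2 :
  total_on F subset -> F G1 -> F G2 ->
  exists G3, [/\ F G3, G1 `<=` G3 & G2 `<=` G3].
Proof.
move=> tot F1 F2; case: (tot _ _ F1 F2) => h.
  by exists G2; split.
by exists G1; split.
Qed.

Lemma comparability {T U} (A : set T) (B : set U) (t0 : T) (u0 : U) :
  injto A B \/ injto B A.
Proof.
pose PC (G : set (T * U)) := [/\ G `<=` A `*` B,
  (forall p q, G p -> G q -> p.1 = q.1 -> p.2 = q.2) &
  (forall p q, G p -> G q -> p.2 = q.2 -> p.1 = q.1)].
have : exists G, PC G /\ forall G', G `<` G' -> ~ PC G'.
  apply: (@Zorn_bigcup _ PC) => F FP tot; split.
  - by move=> q [G FG Gq]; have [+ _ _] := FP _ FG; apply.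
  - move=> p q [G1 F1 p1] [G2 F2 q2].
    have [G3 [F3 s1 s2]] := chain_common tot F1 F2.
    by have [_ + _] := FP _ F3; apply; [apply: s1|apply: s2].
  - move=> p q [G1 F1 p1] [G2 F2 q2].
    have [G3 [F3 s1 s2]] := chain_common tot F1 F2.
    by have [_ _ +] := FP _ F3; apply; [apply: s1|apply: s2].
move=> [G [PG Gmax]]; case: PG => GAB Gf Gi.
have [Adom|/existsNP [a /not_implyP [Aa na]]] := pselect (forall a, A a -> exists b, G (a, b)); last first.
  have [Bdom|/existsNP [b /not_implyP [Bb nb]]] := pselect (forall b, B b -> exists a, G (a, b)); last first.
    exfalso; apply: (Gmax (G `|` [set (a, b)])).
      split; first exact: subsetUl.
      by move=> sub; apply: na; exists b; apply: sub; right.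
    split.
    - by move=> q [/GAB //|-> /=].
    - move=> p q [Gp|->] [Gq|->] //= e.
      + exact: Gf.
      + by exfalso; apply: na; exists p.2; rewrite -e; case: p Gp {e}.
      + by exfalso; apply: na; exists q.2; rewrite e; case: q Gq {e}.
    - move=> p q [Gp|->] [Gq|->] //= e.
      + exact: Gi.
      + by exfalso; apply: nb; exists p.1; rewrite -e; case: p Gp {e}.
      + by exfalso; apply: nb; exists q.1; rewrite e; case: q Gq {e}.
  right; exists (fun b => if pselect (exists a, G (a, b)) is left h then sval (cid h) else t0).
  split.
    move=> b Bb; case: pselect => [h|[]]; last exact: Bdom.
    by have [+ _] := GAB _ (svalP (cid h)).
  move=> b b' Bb Bb'; case: pselect => [h|[]]; last exact: Bdom.
  case: pselect => [h'|[]]; last exact: Bdom.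
  move=> e; have := Gf _ _ (svalP (cid h)) (svalP (cid h')) e; done.
left; exists (fun a => if pselect (exists b, G (a, b)) is left h then sval (cid h) else u0).
split.
  move=> a Aa; case: pselect => [h|[]]; last exact: Adom.
  by have [_ +] := GAB _ (svalP (cid h)).
move=> a a' Aa Aa'; case: pselect => [h|[]]; last exact: Adom.
case: pselect => [h'|[]]; last exact: Adom.
move=> e; have := Gi _ _ (svalP (cid h)) (svalP (cid h')) e; done.
Qed.

Definition dg {T} (G : set ((T * T) * T)) (a : T) := exists v, G ((a, a), v).
Definition graph {T} (Y : set T) (f : T * T -> T) : set ((T * T) * T) :=
  [set q | [/\ Y q.1.1, Y q.1.2 & q.2 = f q.1]].
Definition goodf {T} (X Y0 Y : set T) (f : T * T -> T) :=
  [/\ Y0 `<=` Y, Y `<=` X, (forall a b, Y a -> Y b -> Y (f (a, b))) &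
      (forall a b c d, Y a -> Y b -> Y c -> Y d -> f (a, b) = f (c, d) -> a = c /\ b = d)].
Definition PH {T} (X Y0 : set T) (G : set ((T * T) * T)) :=
  (forall p v w, G (p, v) -> G (p, w) -> v = w) /\
  (forall p q v, G (p, v) -> G (q, v) -> p = q) /\
  (forall a b, dg G a -> dg G b -> exists v, G ((a, b), v)) /\
  (forall a b v, G ((a, b), v) -> [/\ dg G a, dg G b & dg G v]) /\
  (forall a, dg G a -> X a) /\
  (forall a, Y0 a -> dg G a).

Lemma dg_graph {T} (Y : set T) f : (forall a b, Y a -> Y b -> Y (f (a, b))) ->
  forall a, dg (graph Y f) a <-> Y a.
Proof. by move=> fY a; split => [[v [] //]|Ya]; exists (f (a, a)). Qed.

Lemma PH_graph {T} (X Y0 Y : set T) f : goodf X Y0 Y f -> PH X Y0 (graph Y f).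
Proof.
move=> [Y0Y YX fY finj]; have dgE := dg_graph fY.
split; first by move=> p v w [_ _ /= ->] [_ _ /= ->].
split.
  move=> [a b] [c d] v [/= Ya Yb ->] [/= Yc Yd] e.
  by have [-> ->] := finj _ _ _ _ Ya Yb Yc Yd e.
split; first by move=> a b /dgE Ya /dgE Yb; exists (f (a, b)).
split; first by move=> a b v [/= Ya Yb ->]; split; apply/dgE => //; apply: (fY).
by split => a; [move/dgE/YX|move/Y0Y/dgE].
Qed.

Lemma PH_extract {T} (X Y0 : set T) G (t0 : T) : PH X Y0 G ->
  exists f, goodf X Y0 (dg G) f /\ G = graph (dg G) f.
Proof.
move=> [Gf [Gi [Gd [Gr [GX GY0]]]]].
pose f p := if pselect (exists v, G (p, v)) is left h then sval (cid h) else t0.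
have fG a b : dg G a -> dg G b -> G ((a, b), f (a, b)).
  move=> da db; rewrite /f; case: pselect => [h|[]]; last exact: Gd.
  exact: (svalP (cid h)).
have GE : G = graph (dg G) f.
  apply/seteqP; split => [[[a b] v] Gq|[[a b] v] [/= da db ->]]; last exact: fG.
  have [da db _] := Gr _ _ _ Gq; split => //=.
  exact: Gf Gq (fG _ _ da db).
exists f; split => //; split => //.
  by move=> a b da db; have [] := Gr _ _ _ (fG _ _ da db).
move=> a b c d da db dc dd e.
have := Gi _ _ _ (fG _ _ da db); rewrite e => /(_ _ (fG _ _ dc dd)).
by case.
Qed.

Lemma hessenberg {T} (X : set T) : infinite_set X -> injto (X `*` X) X.
Proof.
move=> Xinf; have [t0 Xt0] := infinite_setN0 Xinf.
have [io [ioX ioinj]] : injto [set: nat] X.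
  exact: (card_injto t0 ((infiniteP _).1 Xinf)).
have [pn [_ pninj]] : injto [set: nat * nat] [set: nat].
  by apply: (card_injto 0); have /card_eqPle[] := card_nat2.
pose ioinv t := if pselect (exists n, io n = t) is left h then sval (cid h) else 0%N.
have ioinvK n : ioinv (io n) = n.
  rewrite /ioinv; case: pselect => [h|[]]; last by exists n.
  by apply: (ioinj) => //; exact: (svalP (cid h)).
pose Y0 := [set io n | n in [set: nat]].
have ioinj' m n : io m = io n -> m = n by apply: (ioinj).
pose f0 (p : T * T) := io (pn (ioinv p.1, ioinv p.2)).
have good0 : goodf X Y0 Y0 f0.
  split => //.
  - by move=> _ [n _ <-]; apply: (ioX).
  - by move=> a b _ _; exists (pn (ioinv a, ioinv b)).
  move=> _ _ _ _ [a _ <-] [b _ <-] [c _ <-] [d _ <-].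
  by rewrite /f0 /= !ioinvK => /ioinj' /(pninj _ _ I I) [-> ->].
pose P' G := PH X Y0 G \/ G = set0.
have : exists G, P' G /\ forall G', G `<` G' -> ~ P' G'.
  apply: (@Zorn_bigcup _ P') => F FP tot.
  have [Fne|F0] := pselect (exists2 G, F G & G !=set0); last first.
    right; apply/seteqP; split => // q [G FG Gq]; apply: F0; exists G => //.
    by exists q.
  left.
  have memPH G q : F G -> G q -> PH X Y0 G.
    by move=> FG Gq; case: (FP _ FG) => // G0; rewrite G0 in Gq.
  have dgU a : dg (\bigcup_(G in F) G) a <-> exists2 G, F G & dg G a.
    split => [[v [G FG Gq]]|[G FG [v Gv]]]; first by exists G => //; exists v.
    by exists v; exists G.
  split.
    move=> p v w [G1 F1 q1] [G2 F2 q2].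
    have [G3 [F3 s1 s2]] := chain_common tot F1 F2.
    have [+ _] := memPH _ _ F3 (s1 _ q1); apply; [exact: s1 q1|exact: s2 q2].
  split.
    move=> p q v [G1 F1 q1] [G2 F2 q2].
    have [G3 [F3 s1 s2]] := chain_common tot F1 F2.
    have [_ [+ _]] := memPH _ _ F3 (s1 _ q1); apply; [exact: s1 q1|exact: s2 q2].
  split.
    move=> a b /dgU [G1 F1 [v1 q1]] /dgU [G2 F2 [v2 q2]].
    have [G3 [F3 s1 s2]] := chain_common tot F1 F2.
    have [_ [_ [+ _]]] := memPH _ _ F3 (s1 _ q1).
    move=> /(_ a b) [||v Gv]; [by exists v1; apply: s1|by exists v2; apply: s2|].
    by exists v; exists G3.
  split.
    move=> a b v [G1 F1 q1]; have [_ [_ [_ [+ _]]]] := memPH _ _ F1 q1.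
    move=> /(_ _ _ _ q1) [da db dv]; split; apply/dgU; by exists G1.
  split.
    move=> a /dgU [G1 F1 [v q1]]; have [_ [_ [_ [_ [+ _]]]]] := memPH _ _ F1 q1.
    by apply; exists v.
  move=> a Y0a; have [G1 F1 [q q1]] := Fne.
  have [_ [_ [_ [_ [_ +]]]]] := memPH _ _ F1 q1.
  by move=> /(_ a Y0a) da; apply/dgU; exists G1.
move=> [G [PG Gmax]].
have {}PG : PH X Y0 G.
  case: PG => // G0; exfalso; apply: (Gmax (graph Y0 f0)); last first.
    by left; apply: PH_graph.
  rewrite G0; split => // sub.
  have := sub ((io 0, io 0), f0 (io 0, io 0)); apply; split => //=; by exists 0%N.
have [f [[Y0Y YX fY finj] GE]] := PH_extract t0 PG.
set Y := dg G in Y0Y YX fY finj GE.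
have Yio n : Y (io n) by apply: Y0Y; exists n.
have [ext|[h [hY hinj]]] := comparability Y (X `\` Y) t0 t0.
  exfalso; case: ext => g [gY ginj].
  pose ginv z := if pselect (exists a, Y a /\ g a = z) is left h then sval (cid h) else t0.
  have ginvP z : (exists a, Y a /\ g a = z) -> Y (ginv z) /\ g (ginv z) = z.
    by move=> ex; rewrite /ginv; case: pselect => [h|//]; exact: (svalP (cid h)).
  pose Y' := Y `|` [set g a | a in Y].
  pose u a := if pselect (Y a) then a else ginv a.
  have uY a : Y' a -> Y (u a).
    move=> Ya'; rewrite /u; case: pselect => // nY'.
    case: Ya' => // -[b Yb gb].
    by have [] := ginvP a (ex_intro _ b (conj Yb gb)).
  pose tg a b := if pselect (Y a) then 0%N else if pselect (Y b) then 1%N else 2%N.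
  pose f' (p : T * T) := if pselect (Y p.1 /\ Y p.2) then f p
                         else g (f (f (u p.1, u p.2), io (tg p.1 p.2))).
  have gnY a : Y a -> ~ Y (g a) by move=> /gY [].
  have uK a : Y' a -> ~ Y a -> g (u a) = a.
    move=> Ya' nY; rewrite /u; case: pselect => // nY'.
    case: Ya' => // -[b Yb gb].
    by have [] := ginvP a (ex_intro _ b (conj Yb gb)).
  have good' : goodf X Y0 Y' f'.
    split.
    - by move=> a /Y0Y; left.
    - move=> a [/YX //|[b Yb gb]]; rewrite -gb; by have [] := gY _ Yb.
    - move=> a b Ya Yb; rewrite /f' /=; case: (pselect (Y a /\ Y b)) => [[ya yb]|nab].
        by left; apply: (fY).
      right; exists (f (f (u a, u b), io (tg a b))) => //.
      by apply: (fY); [apply: (fY); apply: (uY)|apply: (Yio)].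
    move=> a b c d Ya Yb Yc Yd; rewrite /f' /=.
    case: (pselect (Y a /\ Y b)) => [[ya yb]|nab];
      case: (pselect (Y c /\ Y d)) => [[yc yd]|ncd] /=.
    + exact: finj.
    + move=> e; exfalso; apply: (gnY (f (f (u c, u d), io (tg c d)))).
        by apply: (fY); [apply: (fY); apply: (uY)|].
      by rewrite -e; apply: (fY).
    + move=> e; exfalso; apply: (gnY (f (f (u a, u b), io (tg a b)))).
        by apply: (fY); [apply: (fY); apply: (uY)|].
      by rewrite e; apply: (fY).
    move=> e.
    have := ginj _ _ (fY _ _ (fY _ _ (uY _ Ya) (uY _ Yb)) (Yio _))
                 (fY _ _ (fY _ _ (uY _ Yc) (uY _ Yd)) (Yio _)) e.
    move=> /finj [||||e1 /ioinj' etg]; try (by apply: (fY); apply: (uY)); try exact: Yio.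
    have [ea eb] := finj _ _ _ _ (uY _ Ya) (uY _ Yb) (uY _ Yc) (uY _ Yd) e1.
    have same x y : Y' x -> Y' y -> (Y x <-> Y y) -> u x = u y -> x = y.
      move=> Yx Yy xy; rewrite {1}/u.
      case: (pselect (Y x)) => yx; case: (pselect (Y y)) => yy /=.
      - by rewrite /u; case: (pselect (Y y)).
      - by case: yy; apply/xy.
      - by case: yx; apply/xy.
      move=> ex; rewrite -(uK _ Yx yx) -(uK _ Yy yy); congr g.
      by rewrite {1}/u; case: (pselect (Y x)) => [/yx[]|_] /=.
    move: etg; rewrite /tg.
    case: (pselect (Y a)) => ya; case: (pselect (Y c)) => yc;
      case: (pselect (Y b)) => yb; case: (pselect (Y d)) => yd /= etg; try discriminate;
      split; apply: same => //; tauto.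
  apply: (Gmax (graph Y' f')); last by left; apply: PH_graph.
  rewrite GE; split.
    move=> [[a b] v] [/= Ya Yb ->]; split => /=; [by left|by left|].
    by rewrite /f'; case: pselect => // -[]; split.
  move=> sub; have Yg : Y' (g (io 0)) by right; exists (io 0).
  have [/= Yg' _ _] := sub ((g (io 0), g (io 0)), f' (g (io 0), g (io 0))) (And3 Yg Yg erefl).
  exact: (gnY (io 0)) (Yio 0) Yg'.
pose k a := if pselect (Y a) then f (a, io 0) else f (h a, io 1).
have kY a : X a -> Y (k a).
  move=> Xa; rewrite /k; case: pselect => Ya; apply: (fY) => //; apply: (hY); by split.
have kinj a b : X a -> X b -> k a = k b -> a = b.
  move=> Xa Xb; rewrite /k; case: (pselect (Y a)) => Ya; case: (pselect (Y b)) => Yb /=.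
  - by move/(finj _ _ _ _ Ya (Yio 0) Yb (Yio 0)) => [-> _].
  - by move/(finj _ _ _ _ Ya (Yio 0) (hY _ (conj Xb Yb)) (Yio 1)) => [_ /ioinj'].
  - by move/(finj _ _ _ _ (hY _ (conj Xa Ya)) (Yio 1) Yb (Yio 0)) => [_ /ioinj'].
  move/(finj _ _ _ _ (hY _ (conj Xa Ya)) (Yio 1) (hY _ (conj Xb Yb)) (Yio 1)) => [+ _].
  exact: hinj.
exists (fun p => f (k p.1, k p.2)); split.
  by move=> [a b] [/= Xa Xb]; apply: (YX); apply: (fY); apply: (kY).
move=> [a b] [c d] [/= Xa Xb] [/= Xc Xd] /finj [||||/kinj -> // /kinj -> //]; exact: kY.
Qed.
Lemma finite_nat_bounded (A : set nat) : finite_set A -> exists M, forall a, A a -> a < M.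
Proof.
move=> /finite_seqP[s ->]; exists (sumn s).+1 => a /=; rewrite ltnS.
elim: s => //= x s IH; rewrite inE => /orP[/eqP->|/IH]; first exact: leq_addr.
by move=> h; apply: leq_trans h (leq_addl _ _).
Qed.

Lemma infinite_nat_unb (A : set nat) :
  infinite_set A <-> forall n, exists a, n <= a /\ A a.
Proof.
split=> [Ainf n|H /finite_nat_bounded [M HM]].
  apply: contrapT => nex; apply: Ainf; apply: (@sub_finite_set _ _ `I_n); last exact: finite_II.
  move=> a Aa /=; rewrite ltnNge; apply/negP => na; apply: nex; by exists a.
by have [a [Ma /HM]] := H M; rewrite ltnNge Ma.
Qed.

Lemma unbounded_infinite {T} (Y : set T) (g : T -> nat) :
  (forall n, exists y, Y y /\ n <= g y) -> infinite_set Y.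
Proof.
move=> H /(finite_image g) /finite_nat_bounded [M HM].
have [y [Yy My]] := H M.
by have := HM (g y) (imageP _ Yy); rewrite ltnNge My.
Qed.

Lemma infinite_setT_nat : infinite_set [set: nat].
Proof. by apply/infinite_nat_unb => n; exists n. Qed.

Lemma pick_gt (A : set nat) (M : nat) : infinite_set A -> exists a, M < a /\ A a.
Proof. by move=> /infinite_nat_unb /(_ M.+1). Qed.

Lemma finite_family_split (s : seq (set nat)) :
  (forall A, A \in s -> infinite_set A) ->
  exists B, infinite_set B /\ forall A, A \in s -> splits B A.
Proof.
case: s => [|A0 s0] Hs; first by exists setT; split => //; exact: infinite_setT_nat.
set s := A0 :: s0 in Hs *; set k := size s.
have k0 : 0 < k by [].
pose Aof n := nth set0 s ((n./2) %% k).
have Aofs n : Aof n \in s by apply: mem_nth; rewrite ltn_mod.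
have pk : forall n M, {a | M < a /\ Aof n a}.
  move=> n M; apply: cid; apply: pick_gt; exact: Hs (Aofs n).
pose p := fix p n := if n is n'.+1 then sval (pk n (p n')) else sval (pk 0 0).
have pA n : Aof n (p n).
  by case: n => [|n]; [exact: (svalP (pk 0 0)).2 | exact: (svalP (pk n.+1 (p n))).2].
have pS n : p n < p n.+1 by exact: (svalP (pk n.+1 (p n))).1.
have pmono m d : p m < p (m + d.+1).
  elim: d => [|d IH]; first by rewrite addn1; exact: pS.
  apply: ltn_trans IH _; rewrite [m + d.+2]addnS; exact: pS.
have pinj m n : p m = p n -> m = n.
  move=> e; case: (ltngtP m n) => // h.
    by move: (pmono m (n - m.+1)); rewrite addnS -addSn subnKC // e ltnn.
  by move: (pmono n (m - n.+1)); rewrite addnS -addSn subnKC // e ltnn.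
have pge n : n <= p n.
  elim: n => // n IH; exact: leq_ltn_trans IH (pS n).
pose B := [set p n | n in [set n | odd n]].
have Bp n : B (p n) <-> odd n.
  by split => [[m /= om /pinj <-]|on]; [|exists n].
have AofE i t (b : bool) : i < k -> Aof (b + (t * k + i).*2) = nth set0 s i.
  by move=> ik; rewrite /Aof half_bit_double modnMDl modn_small.
exists B; split.
  apply: (unbounded_infinite (g := id)) => n; exists (p n.*2.+1); split.
    by apply/Bp; rewrite /= odd_double.
  apply: leq_trans (pge _); rewrite -addnn; apply: leq_trans (leq_addr _ _) _.
  exact: leqnSn.
move=> A As; have ik : index A s < k by rewrite index_mem.
have nthA : nth set0 s (index A s) = A by apply: nth_index.
split.
  apply: (unbounded_infinite (g := id)) => n.
  exists (p (true + (n * k + index A s).*2)); split.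
    split; first by have := pA (true + (n * k + index A s).*2); rewrite AofE // nthA.
    by apply/Bp; rewrite /= odd_double.
  apply: leq_trans (pge _) => /=; rewrite -addnn add1n ltnW // ltnS.
  apply: leq_trans (leq_addr _ _); apply: leq_trans (leq_addr _ _).
  by rewrite leq_pmulr.
apply: (unbounded_infinite (g := id)) => n.
exists (p (false + (n * k + index A s).*2)); split.
  split; first by have := pA (false + (n * k + index A s).*2); rewrite AofE // nthA.
  by move/Bp; rewrite /= odd_double.
apply: leq_trans (pge _) => /=; rewrite -addnn add0n.
apply: leq_trans (leq_addr _ _); apply: leq_trans (leq_addr _ _).
by rewrite leq_pmulr.
Qed.

Lemma injto_Xnat {T} (X : set T) : infinite_set X -> injto (X `*` [set: nat]) X.
Proof.
move=> Xinf; have [t0 _] := infinite_setN0 Xinf.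
have io : injto [set: nat] X by exact: (card_injto t0 ((infiniteP _).1 Xinf)).
apply: injto_trans (hessenberg Xinf).
exact: injto_setX (injto_sub (@subset_refl _ X)) io.
Qed.

Lemma injto_XXnat {T} (X : set T) : infinite_set X -> injto ((X `*` X) `*` [set: nat]) X.
Proof.
move=> Xinf; have [t0 _] := infinite_setN0 Xinf.
have io : injto [set: nat] X by exact: (card_injto t0 ((infiniteP _).1 Xinf)).
apply: injto_trans (hessenberg Xinf).
exact: injto_setX (hessenberg Xinf) io.
Qed.

Lemma reaping_infinite R : reaping_family R -> infinite_set R.
Proof.
move=> [Rinf Rns] /finite_seqP [s Rs]; apply: Rns.
have Hs : forall A, A \in s -> infinite_set A by move=> A As; apply: Rinf; rewrite Rs.
have [B [Binf HB]] := finite_family_split Hs.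
by exists B; split => // A RA; apply: HB; move: RA; rewrite Rs.
Qed.

Lemma reaping_unsplit R : reaping_family R -> forall B, exists2 A, R A & ~ splits B A.
Proof.
move=> [Rinf Rns] B; apply: contrapT => H.
have allsp : forall A, R A -> splits B A.
  by move=> A RA; apply: contrapT => nsp; apply: H; exists A.
have [Binf|Bfin] := pselect (infinite_set B).
  by apply: Rns; exists B.
apply: Rns; exists (~` B); split.
  move=> CBfin; apply: infinite_setT_nat.
  by rewrite -(setUv B); rewrite finite_setU; split => //; apply: contrapT.
move=> A RA; have [h1 h2] := allsp A RA; split.
  by rewrite -setDE.
by rewrite setDE setCK.
Qed.

Definition Ybr (P : nat -> bool) : set (seq bool) := [set s | exists n, s = mkseq P n].

Lemma Ybr_infinite P : infinite_set (Ybr P).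
Proof.
by apply: (unbounded_infinite (g := size)) => n; exists (mkseq P n); split;
  [exists n|rewrite size_mkseq].
Qed.

Lemma branch_S (A : set nat) (P : nat -> bool) a a' :
  A a -> A a' -> P a <> P a' -> finite_set (S_of A `&` Ybr P).
Proof.
move=> Aa Aa' neq.
apply: (@sub_finite_set _ _ (mkseq P @` `I_(maxn a a').+1)); last first.
  by apply: finite_image; exact: finite_II.
move=> s [Ss [n sE]]; exists n => //=; rewrite ltnS leqNgt; apply/negP => lt.
apply: neq; move: (Ss a a' Aa Aa'); rewrite sE size_mkseq !nth_mkseq.
- by apply; [apply: leq_ltn_trans lt; apply: leq_maxl|apply: leq_ltn_trans lt; apply: leq_maxr].
- by apply: leq_ltn_trans lt; apply: leq_maxr.
- by apply: leq_ltn_trans lt; apply: leq_maxl.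
Qed.

Lemma direction1 F : cov_star_family Spl F -> exists2 G, reaping_family G & (G #<= F).
Proof.
move=> [FSpl Fcov].
have /choice [L HL] : forall Z, exists As : seq (set nat), F Z ->
    (forall A, A \in As -> infinite_set A) /\
    (forall s, Z s -> exists2 A, A \in As & S_of A s).
  move=> Z; have [FZ|nFZ] := pselect (F Z); last by exists [::].
  by have [As HAs] := FSpl Z FZ; exists As.
pose G := [set A | exists2 Z, F Z & A \in L Z].
have Grp : reaping_family G.
  split; first by move=> A [Z FZ AL]; exact: (HL Z FZ).1.
  move=> [B [Binf HB]].
  pose P n := `[< B n >].
  have [Z FZ ZY] := Fcov _ (@Ybr_infinite P).
  apply: ZY; apply: (@sub_finite_set _ _ (\bigcup_(A in [set` L Z]) (S_of A `&` Ybr P))).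
    move=> s [Zs Ys]; have [A AL SA] := (HL Z FZ).2 s Zs.
    by exists A.
  apply: bigcup_finite; first exact: finite_seq.
  move=> A /= AL; have [/infinite_setN0 [a [Aa Ba]] /infinite_setN0 [a' [Aa' nBa']]] :=
    HB A (ex_intro2 _ _ Z FZ AL).
  apply: (branch_S Aa Aa'); rewrite /P (asboolT Ba) (asboolF nBa'); done.
exists G => //.
have Finf : infinite_set F.
  move=> Ffin; have Gfin : finite_set G.
    apply: (@sub_finite_set _ _ (\bigcup_(Z in F) [set` L Z])).
      by move=> A [Z FZ AL]; exists Z.
    by apply: bigcup_finite => // Z _; exact: finite_seq.
  exact: (reaping_infinite Grp).
have /choice [zof Hzof] : forall A, exists Z, G A -> F Z /\ A \in L Z.
  move=> A; have [[Z FZ AL]|nGA] := pselect (G A); last by exists set0.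
  by exists Z.
apply: injto_card; apply: injto_trans (injto_Xnat Finf).
exists (fun A => (zof A, index A (L (zof A)))); split.
  by move=> A GA; split => //; exact: (Hzof A GA).1.
move=> A A' GA GA' [e ei].
have [_ AL] := Hzof A GA; have [_ AL'] := Hzof A' GA'.
by rewrite -(nth_index set0 AL) -(nth_index set0 AL') ei e.
Qed.

Fixpoint rank (A : set nat) (n : nat) : nat :=
  if n is m.+1 then rank A m + `[< A m >] else 0.

Lemma rank_mono A m n : m <= n -> rank A m <= rank A n.
Proof.
move=> /subnKC <-; elim: (n - m) => [|d IH]; first by rewrite addn0.
by rewrite addnS /=; apply: leq_trans IH (leq_addr _ _).
Qed.

Lemma rank_lt A a b : A a -> a < b -> rank A a < rank A b.
Proof.
move=> Aa ab; apply: leq_trans (rank_mono A ab) => /=.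
by rewrite (asboolT Aa) addn1.
Qed.

Lemma rank_inj A a b : A a -> A b -> rank A a = rank A b -> a = b.
Proof.
move=> Aa Ab e; case: (ltngtP a b) => // h.
  by have := rank_lt Aa h; rewrite e ltnn.
by have := rank_lt Ab h; rewrite e ltnn.
Qed.

Lemma rank_unb A : infinite_set A -> forall r, exists n, r <= rank A n.
Proof.
move=> Ainf; elim=> [|r [n IH]]; first by exists 0.
have [a [na Aa]] := (infinite_nat_unb A).1 Ainf n.
exists a.+1; apply: leq_ltn_trans IH _; apply: leq_ltn_trans (rank_mono A na) _.
exact: rank_lt Aa (ltnSn a).
Qed.

Lemma rank_surj A : infinite_set A -> forall r, exists a, A a /\ rank A a = r.
Proof.
move=> Ainf r.
have ex : exists n, r < rank A n by have [n h] := rank_unb Ainf r.+1; exists n.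
case: (ex_minnP ex) => n rn nmin.
case: n rn nmin => [//|m] /= rm mmin.
have rm' : rank A m <= r by rewrite leqNgt; apply/negP => /mmin; rewrite ltnn.
case: (pselect (A m)) => Am.
  by exists m; split => //; move: rm; rewrite (asboolT Am) addn1 ltnS => h; apply/eqP;
    rewrite eqn_leq rm' h.
by move: rm; rewrite (asboolF Am) addn0 ltnNge rm'.
Qed.

Lemma rank_big A : infinite_set A -> forall M, exists N, forall a, N <= a -> M <= rank A a.
Proof.
move=> Ainf M; have [N HN] := rank_unb Ainf M.
by exists N => a Na; apply: leq_trans HN (rank_mono A Na).
Qed.

Definition Dset (A C : set nat) (m : nat) : set nat :=
  [set a | [/\ A a, C (rank A a) & m <= a]].

Lemma Dset_infinite A C m : infinite_set A -> infinite_set C -> infinite_set (Dset A C m).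
Proof.
move=> Ainf Cinf; apply/infinite_nat_unb => n.
have [r [rge Cr]] := (infinite_nat_unb C).1 Cinf (rank A (n + m)).
have [a [Aa ra]] := rank_surj Ainf r.
have nma : n + m <= a.
  rewrite leqNgt; apply/negP => /(rank_lt Aa); rewrite ra ltnNge rge //.
exists a; split; first by apply: leq_trans nma; apply: leq_addr.
split => //; first by rewrite ra.
by apply: leq_trans nma; apply: leq_addl.
Qed.

Definition pref (p s : seq bool) := exists t, s = p ++ t.

Lemma pref_nth p s i : pref p s -> i < size p -> nth false s i = nth false p i.
Proof. by move=> [t ->] ip; rewrite nth_cat ip. Qed.

Lemma pref_size p s : pref p s -> size p <= size s.
Proof. by move=> [t ->]; rewrite size_cat leq_addr. Qed.

Lemma cov_main R (Y : set (seq bool)) : reaping_family R -> infinite_set Y ->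
  exists A C m, [/\ R A, R C & infinite_set (S_of (Dset A C m) `&` Y)].
Proof.
move=> Rrp Yinf.
pose Inf p := infinite_set [set s | Y s /\ pref p s].
have Inf_split p : Inf p -> Inf (rcons p true) \/ Inf (rcons p false).
  move=> Ip; apply: contrapT => /not_orP [h1 h2]; apply: Ip.
  have f1 := contrapT h1; have f2 := contrapT h2.
  apply: (@sub_finite_set _ _ ([set p] `|` ([set s | Y s /\ pref (rcons p true) s]
                                     `|` [set s | Y s /\ pref (rcons p false) s]))).
    move=> s [Ys [t sE]]; rewrite sE in Ys *; case: t Ys {sE} => [|b t] Ys; first by left; rewrite cats0.
    right; case: b Ys => Ys; [left|right]; split => //; rewrite /pref; exists t; by rewrite cat_rcons.
  by rewrite !finite_setU; split; [exact: finite_set1|split].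
pose pre := fix pre n := if n is m.+1 then rcons (pre m) `[< Inf (rcons (pre m) true) >]
                         else [::].
have Ipre n : Inf (pre n).
  elim: n => [|n IH] /=.
    move=> fin; apply: Yinf; apply: sub_finite_set fin => s Ys; split => //; rewrite /pref; by exists s.
  case: (pselect (Inf (rcons (pre n) true))) => h; first by rewrite (asboolT h).
  by rewrite (asboolF h); case: (Inf_split _ IH).
have size_pre n : size (pre n) = n by elim: n => //= n IH; rewrite size_rcons IH.
pose x n := nth false (pre n.+1) n.
have pre_nth n i : i < n -> nth false (pre n) i = x i.
  elim: n => // n IH; rewrite ltnS leq_eqVlt => /orP[/eqP ->|lt]; first by [].
  by rewrite /= nth_rcons size_pre lt IH.
pose nx N := sval (cid (infinite_setN0 (Ipre N))).
have nxP N : Y (nx N) /\ pref (pre N) (nx N) by exact: (svalP (cid (infinite_setN0 (Ipre N)))).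
pose Nseq j := iter j (fun n => (size (nx n)).+1) 0.
pose sig j := nx (Nseq j).
have Nle j : Nseq j <= size (sig j).
  by have := pref_size (nxP (Nseq j)).2; rewrite size_pre.
have Nlt j : size (sig j) < Nseq j.+1 by [].
have Nincr j : Nseq j < Nseq j.+1 by apply: leq_ltn_trans (Nle j) (Nlt j).
have Nmono k l : k < l -> Nseq k.+1 <= Nseq l.
  elim: l => // l IH; rewrite ltnS leq_eqVlt => /orP[/eqP ->//|/IH h].
  by apply: leq_trans h (ltnW (Nincr l)).
have Nge j : j <= Nseq j by elim: j => // j IH; apply: leq_ltn_trans IH (Nincr j).
have sig_agree j i : i < Nseq j -> nth false (sig j) i = x i.
  move=> ij; rewrite (pref_nth (nxP (Nseq j)).2) ?size_pre //; exact: pre_nth.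
have intv_uniq k l a : Nseq k <= a < Nseq k.+1 -> Nseq l <= a < Nseq l.+1 -> k = l.
  move=> /andP[ka ak] /andP[la al]; case: (ltngtP k l) => // h.
    by have := leq_trans (Nmono _ _ h) la; rewrite leqNgt ak.
  by have := leq_trans (Nmono _ _ h) ka; rewrite leqNgt al.
pose B1 := [set n | exists j, Nseq j.*2 <= n < Nseq j.*2.+1].
have [A RA nspA] := reaping_unsplit Rrp B1.
have Ainf := Rrp.1 A RA.
have [q [M1 HM1]] : exists (q : bool) M1, forall a j, A a -> M1 <= a ->
    Nseq (q + j.*2) <= a < Nseq (q + j.*2).+1 -> False.
  case: (pselect (finite_set (A `\` B1))) => [fin|inf].
    have [M HM] := finite_nat_bounded fin.
    exists true, M => a j Aa Ma aI.
    have B1a : B1 a.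
      by apply: contrapT => nB; have := HM a (conj Aa nB); rewrite ltnNge Ma.
    case: B1a => i iI; have := intv_uniq _ _ _ iI aI.
    by move=> /(congr1 odd); rewrite /= !odd_double.
  have fin : finite_set (A `&` B1) by apply: contrapT => h; apply: nspA.
  have [M HM] := finite_nat_bounded fin.
  exists false, M => a j Aa Ma aI.
  by have := HM a (conj Aa (ex_intro _ j aI)); rewrite ltnNge Ma.
pose B2 := [set r | exists a, [/\ A a, rank A a = r & x a]].
have [C RC nspC] := reaping_unsplit Rrp B2.
have [c [M2 HM2]] : exists (c : bool) M2, forall a, A a -> C (rank A a) -> M2 <= a -> x a = c.
  case: (pselect (finite_set (C `\` B2))) => [fin|inf].
    have [M HM] := finite_nat_bounded fin; have [N HN] := rank_big Ainf M.
    exists true, N => a Aa Ca Na.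
    have B2r : B2 (rank A a).
      by apply: contrapT => nB; have := HM _ (conj Ca nB); rewrite ltnNge HN.
    by case: B2r => a' [Aa' /(rank_inj Aa' Aa) -> ->].
  have fin : finite_set (C `&` B2) by apply: contrapT => h; apply: nspC.
  have [M HM] := finite_nat_bounded fin; have [N HN] := rank_big Ainf M.
  exists false, N => a Aa Ca Na; apply/negbTE/negP => xa.
  by have := HM _ (conj Ca (ex_intro _ a (And3 Aa erefl xa))); rewrite ltnNge HN.
exists A, C, (maxn M1 M2); split => //.
have good j d : Dset A C (maxn M1 M2) d -> d < size (sig (q + j.*2)) ->
    nth false (sig (q + j.*2)) d = c.
  move=> [Ad Cd md] ds.
  have dN : d < Nseq (q + j.*2).
    rewrite ltnNge; apply/negP => Nd; apply: (HM1 d j Ad).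
      by apply: leq_trans md; apply: leq_maxl.
    by rewrite Nd /=; apply: leq_trans ds _.
  rewrite sig_agree //; apply: HM2 => //.
  by apply: leq_trans md; apply: leq_maxr.
apply: (unbounded_infinite (g := size)) => n; exists (sig (q + n.*2)); split.
  split; last exact: (nxP _).1.
  move=> i i' Di Di' iS i'S; by rewrite !good.
apply: leq_trans (Nle _); apply: leq_trans (Nge _).
by rewrite -addnn addnA leq_addl.
Qed.

Lemma direction2 R : reaping_family R -> exists2 F, cov_star_family Spl F & (F #<= R).
Proof.
move=> Rrp.
exists [set S_of (Dset p.1.1 p.1.2 p.2) | p in (R `*` R) `*` [set: nat]].
  split.
    move=> _ [[[A C] m] [[/= RA RC] _] <-].
    exists [:: Dset A C m]; split.
      move=> D; rewrite mem_seq1 => /eqP ->.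
      by apply: Dset_infinite; apply: Rrp.1.
    by move=> s Ss; exists (Dset A C m) => //; rewrite mem_seq1.
  move=> Y Yinf; have [A [C [m [RA RC Hinf]]]] := cov_main Rrp Yinf.
  by exists (S_of (Dset A C m)) => //; exists ((A, C), m).
apply: card_le_trans (card_image_le _ _) _.
exact: injto_card (injto_XXnat (reaping_infinite Rrp)).
Qed.

Theorem mainTheorem5 : min_card_eq (cov_star_family Spl) reaping_family.
Proof. by split; [exact: direction1|exact: direction2]. Qed.
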